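(* Let $\|\cdot\|$ be a strictly convex norm on $\mathbb{R}^n$ that is continuously differentiable on $\mathbb{R}^n\setminus\{0\}$, with gradient $N(x)$ at $x\ne0$, and set $h(x,y)=\|y\|-\langle y,N(x)\rangle$ for $x\ne0$. (1) Suppose there are constants $T,r>0$ such that $h(x,x+2y)\le T h(x,x+y)$ whenever $x\ne0$, $\|y\|\le r\|x\|$ and $\langle y,N(x)\rangle=0$. Then there is a constant $T'$ such that $h(x,x+2y)\le T' h(x,x+y)$ for all $x\neq 0$ and all $y$ with $\langle y,N(x)\rangle=0$. (2) Suppose there are constants $r,K>0$ such that $h(x,x+y)\le K h(x,x-y)$ whenever $x\ne0$, $\|y\|\le r\|x\|$ and $\langle y,N(x)\rangle=0$. Then there is a constant $K'$ such that $h(x,x+y)\le K' h(x,x-y)$ for all $x\ne0$ and all $y$ with $\langle y,N(x)\rangle=0$.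
   Context: $\langle\cdot,\cdot\rangle$ is the Euclidean inner product. Strict convexity of the norm means: if $x,y\neq0$ and $\|x+y\|=\|x\|+\|y\|$, then $y=\alpha x$ for some $\alpha>0$. The hypothesis of (1) is called ''doubling in the tangent plane'', that of (2) ''balanced in the tangent plane''. *)

(* Defs.v *)
(* R^n is 'rV[R]_n for R : realType. *)
From HB Require Import structures.
From mathcomp Require Import all_boot all_order all_algebra.
From mathcomp Require Import all_classical all_reals all_analysis.
Set Implicit Arguments. Unset Strict Implicit. Unset Printing Implicit Defensive.
Import Order.TTheory GRing.Theory Num.Theory.
Import numFieldNormedType.Exports.
Local Open Scope ring_scope.

Definition dotv (R : realType) (n : nat) (u v : 'rV[R]_n) : R :=
  \sum_(i < n) u ord0 i * v ord0 i.

Definition is_norm (R : realType) (n : nat) (nrm : 'rV[R]_n -> R) : Prop :=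
  [/\ forall x, 0 <= nrm x,
      forall x, nrm x = 0 -> x = 0,
      forall (a : R) x, nrm (a *: x) = `|a| * nrm x
    & forall x y, nrm (x + y) <= nrm x + nrm y].

Definition strictly_convex_norm (R : realType) (n : nat) (nrm : 'rV[R]_n -> R) : Prop :=
  forall x y, x != 0 -> y != 0 -> nrm (x + y) = nrm x + nrm y ->
    exists2 a : R, 0 < a & y = a *: x.

(* nrm is C^1 on R^n \ {0} with gradient N: differentiable at each x <> 0,
   with differential v |-> <v, N x>, and N continuous at each x <> 0. *)
Definition C1_gradient (R : realType) (n : nat) (nrm : 'rV[R]_n -> R)
  (N : 'rV[R]_n -> 'rV[R]_n) : Prop :=
  forall x, x != 0 ->
    [/\ differentiable nrm x,
        (forall v, ('d nrm x : 'rV[R]_n -> R) v = dotv v (N x))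
      & {for x, continuous N}].

Definition hfun (R : realType) (n : nat) (nrm : 'rV[R]_n -> R)
  (N : 'rV[R]_n -> 'rV[R]_n) (x y : 'rV[R]_n) : R :=
  nrm y - dotv y (N x).

(* Main.v *)
Require Import Defs.
From HB Require Import structures.
From mathcomp Require Import all_boot all_order all_algebra.
From mathcomp Require Import all_classical all_reals all_analysis.
From mathcomp Require Import ring lra.
Set Implicit Arguments. Unset Strict Implicit. Unset Printing Implicit Defensive.
Import Order.TTheory GRing.Theory Num.Theory.
Import numFieldNormedType.Exports.
Local Open Scope ring_scope.
Local Open Scope classical_set_scope.

Lemma nrm0 (R : realType) (n : nat) (nrm : 'rV[R]_n -> R) :
  is_norm nrm -> nrm 0 = 0.
Proof. case=> _ _ hZ _; by rewrite -(scale0r (0 : 'rV[R]_n)) hZ normr0 mul0r. Qed.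

Lemma nrmN (R : realType) (n : nat) (nrm : 'rV[R]_n -> R) x :
  is_norm nrm -> nrm (- x) = nrm x.
Proof. case=> _ _ hZ _; by rewrite -scaleN1r hZ normrN normr1 mul1r. Qed.

Lemma nrmZp (R : realType) (n : nat) (nrm : 'rV[R]_n -> R) a x :
  is_norm nrm -> 0 <= a -> nrm (a *: x) = a * nrm x.
Proof. case=> _ _ hZ _ a0; by rewrite hZ ger0_norm. Qed.

Lemma coord_le (R : realType) (n : nat) (x : 'rV[R]_n) i : `|x ord0 i| <= `|x|.
Proof.
have /mapP[j Hj ->] : `|x ord0 i| \in [seq `|x k.1 k.2| | k : 'I_1 * 'I_n].
  by apply/mapP; exists (ord0, i) => //=; rewrite mem_enum.
by rewrite [leRHS]/Num.Def.normr /= mx_normrE; apply/bigmax_geP; right => /=; exists j.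
Qed.

Lemma nrm_le_mx (R : realType) (n : nat) (nrm : 'rV[R]_n -> R) :
  is_norm nrm -> exists2 C : R, 0 < C & forall x, nrm x <= C * `|x|.
Proof.
move=> hn; have [h0 _ hZ hT] := hn.
exists (1 + \sum_(i < n) nrm (delta_mx ord0 i)).
  by rewrite ltr_pwDl // sumr_ge0.
move=> x.
have Hx : x = \sum_(i < n) x ord0 i *: delta_mx ord0 i.
  by rewrite {1}(matrix_sum_delta x) big_ord1.
rewrite {1}Hx.
apply: (le_trans (y := \sum_(i < n) `|x| * nrm (delta_mx ord0 i))).
  apply: (big_ind2 (fun u v => nrm u <= v)).
  - by rewrite nrm0.
  - by move=> a b c d h1 h2; apply: le_trans (hT _ _) (lerD h1 h2).
  - move=> i _; rewrite hZ; apply: ler_wpM2r => //.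
    exact: coord_le.
rewrite -mulr_sumr mulrC; apply: ler_wpM2r => //; rewrite lerDr //.
Qed.

Lemma nrm_rev (R : realType) (n : nat) (nrm : 'rV[R]_n -> R) a x :
  is_norm nrm -> `|nrm a - nrm x| <= nrm (a - x).
Proof.
move=> hn; have [_ _ _ hT] := hn.
rewrite ler_norml; apply/andP; split.
  have := hT (x - a) a; rewrite subrK -opprB nrmN //; lra.
have := hT (a - x) x; rewrite subrK; lra.
Qed.

Lemma nrm_cont (R : realType) (n : nat) (nrm : 'rV[R]_n -> R) :
  is_norm nrm -> continuous nrm.
Proof.
move=> hn a; have [C C0 hC] := nrm_le_mx hn.
apply/(@cvgrPdist_lt _ _ _ _ (nbhs_filter a)) => e e0.
have eC : 0 < e / C by rewrite divr_gt0.
near=> x.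
apply: (le_lt_trans (nrm_rev _ _ hn)); apply: (le_lt_trans (hC _)).
rewrite mulrC -ltr_pdivlMr //.
Unshelve. all: end_near.
Qed.

Lemma dotvDl (R : realType) (n : nat) (u v w : 'rV[R]_n) :
  dotv (u + v) w = dotv u w + dotv v w.
Proof. by rewrite /dotv -big_split; apply: eq_bigr => i _; rewrite mxE mulrDl. Qed.

Lemma dotvZl (R : realType) (n : nat) a (u w : 'rV[R]_n) :
  dotv (a *: u) w = a * dotv u w.
Proof. by rewrite /dotv mulr_sumr; apply: eq_bigr => i _; rewrite mxE mulrA. Qed.

Lemma dotvNl (R : realType) (n : nat) (u w : 'rV[R]_n) :
  dotv (- u) w = - dotv u w.
Proof. by rewrite -scaleN1r dotvZl mulN1r. Qed.

Lemma dotvBl (R : realType) (n : nat) (u v w : 'rV[R]_n) :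
  dotv (u - v) w = dotv u w - dotv v w.
Proof. by rewrite dotvDl dotvNl. Qed.

Lemma dotv0l (R : realType) (n : nat) (w : 'rV[R]_n) : dotv 0 w = 0.
Proof. by rewrite -(scale0r (0 : 'rV[R]_n)) dotvZl mul0r. Qed.

Lemma cont_sum (T : topologicalType) (R : realType) (I : Type) (r : seq I)
  (F : I -> T -> R) t :
  (forall i, {for t, continuous (F i)}) ->
  {for t, continuous (fun s => \sum_(i <- r) F i s)}.
Proof.
move=> hF; rewrite /prop_for /continuous_at; elim: r => [|i r IH].
  have -> : (fun s => \sum_(i <- [::]) F i s) = (fun=> 0).
    by apply/funext => s; rewrite big_nil.
  rewrite big_nil; exact: cvg_cst.
have -> : (fun s => \sum_(j <- i :: r) F j s) = (fun s => F i s + \sum_(j <- r) F j s).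
  by apply/funext => s; rewrite big_cons.
rewrite big_cons; exact: cvgD (hF i) IH.
Qed.

Lemma dot_cont (T : topologicalType) (R : realType) (n : nat)
  (f g : T -> 'rV[R]_n) t :
  {for t, continuous f} -> {for t, continuous g} ->
  {for t, continuous (fun s => dotv (f s) (g s))}.
Proof.
move=> hf hg; rewrite /dotv; apply: cont_sum => i.
apply: continuousM.
  exact: (continuous_comp hf (@coord_continuous R 1 n ord0 i (f t))).
exact: (continuous_comp hg (@coord_continuous R 1 n ord0 i (g t))).
Qed.

Lemma DL_ge (R : realType) (n : nat) (nrm : 'rV[R]_n -> R) N x v b :
  C1_gradient nrm N -> x != 0 ->
  (forall h, 0 < h < 1 -> b <= (nrm (x + h *: v) - nrm x) / h) ->
  b <= dotv v (N x).
Proof.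
move=> hC hx hb; have [dif dd _] := hC x hx.
rewrite -dd -deriveE //.
have hd := @diff_derivable _ _ _ _ _ v dif.
rewrite /derivable in hd.
have hr := cvg_dnbhs_at_right hd.
rewrite /derive -(cvg_lim _ hr) //.
apply: limr_ge; first exact: (cvgP _ hr).
near=> h.
have h0 : 0 < h by near: h; exact: nbhs_right_gt.
have h1 : h < 1 by near: h; exact: nbhs_right_lt.
have := hb h; rewrite h0 h1 => /(_ isT).
by rewrite /= /shift (addrC (h *: v)) mulrC.
Unshelve. all: by end_near.
Qed.

Lemma DL_le (R : realType) (n : nat) (nrm : 'rV[R]_n -> R) N x v b :
  C1_gradient nrm N -> x != 0 ->
  (forall h, 0 < h < 1 -> (nrm (x + h *: v) - nrm x) / h <= b) ->
  dotv v (N x) <= b.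
Proof.
move=> hC hx hb; have [dif dd _] := hC x hx.
rewrite -dd -deriveE //.
have hd := @diff_derivable _ _ _ _ _ v dif.
rewrite /derivable in hd.
have hr := cvg_dnbhs_at_right hd.
rewrite /derive -(cvg_lim _ hr) //.
apply: limr_le; first exact: (cvgP _ hr).
near=> h.
have h0 : 0 < h by near: h; exact: nbhs_right_gt.
have h1 : h < 1 by near: h; exact: nbhs_right_lt.
have := hb h; rewrite h0 h1 => /(_ isT).
by rewrite /= /shift (addrC (h *: v)) mulrC.
Unshelve. all: by end_near.
Qed.

Lemma supp (R : realType) (n : nat) (nrm : 'rV[R]_n -> R) N x v :
  is_norm nrm -> C1_gradient nrm N -> x != 0 -> dotv v (N x) <= nrm v.
Proof.
move=> hn hC hx; apply: (DL_le hC hx) => h /andP[h0 h1].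
have [_ _ _ hT] := hn.
rewrite ler_pdivrMr // mulrC -(nrmZp _ hn (ltW h0)).
have := hT x (h *: v); lra.
Qed.

Lemma euler (R : realType) (n : nat) (nrm : 'rV[R]_n -> R) N x :
  is_norm nrm -> C1_gradient nrm N -> x != 0 -> dotv x (N x) = nrm x.
Proof.
move=> hn hC hx.
have key : forall h, 0 < h < 1 -> (nrm (x + h *: x) - nrm x) / h = nrm x.
  move=> h /andP[h0 h1].
  rewrite -{1}(scale1r x) -scalerDl (nrmZp _ hn) ?addr_ge0 ?ltW //.
  by field; rewrite gt_eqF.
apply/le_anti/andP; split.
  apply: (@DL_le _ _ nrm N x x (nrm x) hC hx) => h /key ->; exact: lexx.
apply: (@DL_ge _ _ nrm N x x (nrm x) hC hx) => h /key ->; exact: lexx.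
Qed.

Lemma sub_unique (R : realType) (n : nat) (nrm : 'rV[R]_n -> R) N x w :
  is_norm nrm -> C1_gradient nrm N -> x != 0 ->
  (forall v, dotv v w <= nrm v) -> dotv x w = nrm x ->
  forall v, dotv v w = dotv v (N x).
Proof.
move=> hn hC hx hw hxw.
have gen : forall v, dotv v w <= dotv v (N x).
  move=> v; apply: (DL_ge hC hx) => h /andP[h0 h1].
  rewrite ler_pdivlMr //.
  have := hw (x + h *: v); rewrite dotvDl dotvZl hxw; lra.
move=> v; apply/le_anti/andP; split; first exact: gen.
by have := gen (- v); rewrite !dotvNl lerN2.
Qed.

Lemma N_homog (R : realType) (n : nat) (nrm : 'rV[R]_n -> R) N x s v :
  is_norm nrm -> C1_gradient nrm N -> x != 0 -> 0 < s ->
  dotv v (N (s *: x)) = dotv v (N x).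
Proof.
move=> hn hC hx s0.
have hsx : s *: x != 0 by rewrite scaler_eq0 negb_or gt_eqF.
apply: (sub_unique hn hC hx).
  by move=> u; exact: (supp _ hn hC hsx).
have := euler hn hC hsx; rewrite dotvZl (nrmZp _ hn (ltW s0)).
by move/(mulfI (lt0r_neq0 s0)).
Qed.

Lemma nrm_gt0 (R : realType) (n : nat) (nrm : 'rV[R]_n -> R) x :
  is_norm nrm -> x != 0 -> 0 < nrm x.
Proof.
move=> hn hx; have [h0 h00 _ _] := hn.
rewrite lt_neqAle h0 andbT; apply/eqP => /esym /h00 /eqP; exact/negP.
Qed.

Lemma pos_tan (R : realType) (n : nat) (nrm : 'rV[R]_n -> R) N x z :
  is_norm nrm -> strictly_convex_norm nrm -> C1_gradient nrm N ->
  x != 0 -> dotv z (N x) = 0 -> z != 0 -> nrm x < nrm (x + z).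
Proof.
move=> hn hsc hC hx hz z0.
have [h0 h00 hZ hT] := hn.
have ex := euler hn hC hx.
have ge : nrm x <= nrm (x + z).
  by have := supp (x + z) hn hC hx; rewrite dotvDl ex hz addr0.
rewrite lt_neqAle ge andbT; apply/eqP => heq.
have xz0 : x + z != 0.
  apply/eqP => e; move: heq; rewrite e; have := nrm_gt0 hn hx; rewrite nrm0 //.
  by move=> /gt_eqF /eqP.
have eqn : nrm (x + (x + z)) = nrm x + nrm (x + z).
  apply/le_anti/andP; split; first exact: hT.
  have := supp (x + (x + z)) hn hC hx; rewrite !dotvDl ex hz; lra.
have [a a0 ea] := hsc _ _ hx xz0 eqn.
have a1 : a = 1.
  have p := nrm_gt0 hn hx.
  move: heq; rewrite ea hZ ger0_norm; last exact: ltW.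
  move=> heq.
  have : (a - 1) * nrm x = 0 by rewrite mulrBl mul1r -heq subrr.
  move/eqP; rewrite mulf_eq0 subr_eq0 (gt_eqF p) orbF => /eqP -> //.
move: ea; rewrite a1 scale1r -{2}(addr0 x) => /addrI ez.
by move: z0; rewrite ez eqxx.
Qed.

Lemma unit_vec (R : realType) (n : nat) (x : 'rV[R]_n) :
  x != 0 -> `|(`|x|^-1 *: x)| = 1.
Proof.
move=> hx; have p : 0 < `|x| by rewrite normr_gt0.
by rewrite normrZ normrV ?unitfE ?gt_eqF // normr_id mulVf ?gt_eqF.
Qed.

Lemma bnd_set (R : realType) (n : nat) (A : set 'rV[R]_n) (rho : R) :
  (forall x, A x -> `|x| <= rho) -> bounded_set A.
Proof.
move=> hA; exists rho; split; first exact: num_real.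
move=> M hM x /hA; move/le_trans; apply; exact: ltW.
Qed.

Lemma mx_lower (R : realType) (n : nat) (nrm : 'rV[R]_n -> R) :
  is_norm nrm -> exists2 c0 : R, 0 < c0 & forall x, c0 * `|x| <= nrm x.
Proof.
move=> hn; have [h0 _ hZ _] := hn.
pose A := [set x : 'rV[R]_n | `|x| = 1].
have key : forall c0, (forall u, A u -> c0 <= nrm u) -> forall x, c0 * `|x| <= nrm x.
  move=> c0 hc x; have [->|hx] := eqVneq x 0; first by rewrite normr0 mulr0.
  have p : 0 < `|x| by rewrite normr_gt0.
  have q : 0 <= `|x|^-1 by rewrite invr_ge0 ltW.
  have := hc _ (unit_vec hx); rewrite (nrmZp _ hn q).
  by rewrite ler_pdivlMl // mulrC.
have [[u Au]|A0] := pselect (A !=set0); last first.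
  exists 1 => //; apply: key => u Au; exfalso; apply: A0; by exists u.
have cA : compact A.
  apply: bounded_closed_compact; first by apply: (@bnd_set _ _ _ 1) => x ->.
  exact: (preimage_closed (fun x _ => @norm_continuous _ _ x) (@closed_eq _ 1)).
have [c cA' hc] := compact_EVT_min (ex_intro _ u Au) cA
  (@continuous_subspaceT _ _ A _ (nrm_cont hn)).
have Ac : A c by rewrite inE in cA'.
have c0 : c != 0 by apply/eqP => e; move: Ac; rewrite /A /= e normr0 => /eqP; rewrite eq_sym oner_eq0.
exists (nrm c); first exact: nrm_gt0.
apply: key => v Av; apply: hc; by rewrite inE.
Qed.

Lemma G_cont (R : realType) (n : nat) (nrm : 'rV[R]_n -> R) N (r : R)
  (p : 'rV[R]_n * 'rV[R]_n) :
  is_norm nrm -> C1_gradient nrm N -> p.1 != 0 ->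
  {for p, continuous (fun p : 'rV[R]_n * 'rV[R]_n =>
     (nrm (p.1 + p.2) - nrm p.1 - dotv p.2 (N p.1)) +
     `|nrm p.2 - r * nrm p.1| + `|dotv p.2 (N p.1)|)}.
Proof.
move=> hn hC hp; have [_ _ hNc] := hC _ hp.
have c1 : {for p, continuous (fun p : 'rV[R]_n * 'rV[R]_n => p.1)} by apply: cvg_fst.
have c2 : {for p, continuous (fun p : 'rV[R]_n * 'rV[R]_n => p.2)} by apply: cvg_snd.
have cN : {for p, continuous (fun p : 'rV[R]_n * 'rV[R]_n => N p.1)}.
  exact: (continuous_comp c1 hNc).
have cd : {for p, continuous (fun p : 'rV[R]_n * 'rV[R]_n => dotv p.2 (N p.1))}.
  exact: dot_cont.
have cn1 : {for p, continuous (fun p : 'rV[R]_n * 'rV[R]_n => nrm p.1)}.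
  exact: (continuous_comp c1 (@nrm_cont R n nrm hn p.1)).
have cn2 : {for p, continuous (fun p : 'rV[R]_n * 'rV[R]_n => nrm p.2)}.
  exact: (continuous_comp c2 (@nrm_cont R n nrm hn p.2)).
have cs : {for p, continuous (fun p : 'rV[R]_n * 'rV[R]_n => p.1 + p.2)}.
  exact: cvgD.
have cn12 : {for p, continuous (fun p : 'rV[R]_n * 'rV[R]_n => nrm (p.1 + p.2))}.
  exact: (continuous_comp cs (@nrm_cont R n nrm hn (p.1 + p.2))).
apply: cvgD; first apply: cvgD.
- by apply: cvgB => //; apply: cvgB.
- have ci : {for p, continuous (fun p : 'rV[R]_n * 'rV[R]_n => nrm p.2 - r * nrm p.1)}.
    by apply: cvgB => //; apply: cvgMl_tmp.
  exact: (continuous_comp ci (@norm_continuous _ _ _)).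
- exact: (continuous_comp cd (@norm_continuous _ _ _)).
Qed.

Lemma core (R : realType) (n : nat) (nrm : 'rV[R]_n -> R) N (r : R) :
  is_norm nrm -> strictly_convex_norm nrm -> C1_gradient nrm N -> 0 < r ->
  exists2 c : R, 0 < c & forall x z, x != 0 -> dotv z (N x) = 0 ->
    nrm z = r * nrm x -> c * nrm x <= nrm (x + z) - nrm x.
Proof.
move=> hn hsc hC r0.
have [h0 _ hZ hT] := hn.
have [C C0 hCb] := nrm_le_mx hn.
have [c0 c00 hc0] := mx_lower hn.
pose rho := r * C / c0.
pose A := [set x : 'rV[R]_n | `|x| = 1].
pose B := [set z : 'rV[R]_n | `|z| <= rho].
pose K := A `*` B.
pose G := fun p : 'rV[R]_n * 'rV[R]_n =>
     (nrm (p.1 + p.2) - nrm p.1 - dotv p.2 (N p.1)) +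
     `|nrm p.2 - r * nrm p.1| + `|dotv p.2 (N p.1)|.
have A0 : forall x, A x -> x != 0.
  by move=> x Ax; apply/eqP => e; move: Ax; rewrite /A /= e normr0 => /eqP; rewrite eq_sym oner_eq0.
have red : forall x z, x != 0 -> dotv z (N x) = 0 -> nrm z = r * nrm x ->
    K (`|x|^-1 *: x, `|x|^-1 *: z) /\
    G (`|x|^-1 *: x, `|x|^-1 *: z) = `|x|^-1 * (nrm (x + z) - nrm x).
  move=> x z hx hz hzx.
  have p : 0 < `|x| by rewrite normr_gt0.
  have q : 0 <= `|x|^-1 by rewrite invr_ge0 ltW.
  have hd : dotv (`|x|^-1 *: z) (N (`|x|^-1 *: x)) = 0.
    by rewrite (N_homog _ hn hC hx) ?invr_gt0 // dotvZl hz mulr0.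
  have hnz : nrm (`|x|^-1 *: z) = r * nrm (`|x|^-1 *: x).
    by rewrite !(nrmZp _ hn q) hzx mulrCA.
  split.
    split; first exact: unit_vec.
    rewrite /B /= /rho ler_pdivlMr // mulrC.
    apply: (le_trans (hc0 _)); rewrite hnz ler_pM2l //.
    by apply: (le_trans (hCb _)); rewrite unit_vec // mulr1.
  rewrite /G /= hd hnz subrr normr0 addr0 addr0 subr0 -scalerDr.
  by rewrite !(nrmZp _ hn q) mulrBr.
have Gpos : forall p, K p -> 0 < G p.
  case=> x z [Ax Bz] /=; have hx := A0 _ Ax.
  rewrite /G /=.
  have t1 : 0 <= nrm (x + z) - nrm x - dotv z (N x).
    have := supp (x + z) hn hC hx; rewrite dotvDl (euler hn hC hx); lra.
  have [e3|e3] := eqVneq (dotv z (N x)) 0; last first.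
    have : 0 < `|dotv z (N x)| by rewrite normr_gt0.
    have : 0 <= `|nrm z - r * nrm x| by [].
    lra.
  have [e2|e2] := eqVneq (nrm z - r * nrm x) 0; last first.
    have : 0 < `|nrm z - r * nrm x| by rewrite normr_gt0.
    have : 0 <= `|dotv z (N x)| by [].
    lra.
  rewrite e3 e2 normr0 !addr0 subr0 subr_gt0.
  apply: (pos_tan hn hsc hC hx e3).
  apply/eqP => ez; move: e2; rewrite ez.
  rewrite (nrm0 hn) sub0r => /eqP; rewrite oppr_eq0 mulf_eq0 (gt_eqF r0) /=.
  by rewrite (gt_eqF (nrm_gt0 hn hx)).
have [[p Kp]|K0] := pselect (K !=set0); last first.
  exists 1 => // x z hx hz hzx; exfalso; apply: K0.
  by exists (`|x|^-1 *: x, `|x|^-1 *: z); case: (red x z hx hz hzx).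
have cK : compact K.
  apply: compact_setX.
    apply: bounded_closed_compact; first by apply: (@bnd_set _ _ _ 1) => x ->.
    exact: (preimage_closed (fun x _ => @norm_continuous _ _ x) (@closed_eq _ 1)).
  apply: bounded_closed_compact; first exact: (@bnd_set _ _ _ rho).
  exact: (preimage_closed (fun x _ => @norm_continuous _ _ x) (@closed_le _ rho)).
have cG : {within K, continuous G}.
  rewrite continuous_subspace_in => q /set_mem Kq.
  apply: continuous_subspaceT_for => //.
  by apply: G_cont => //; apply: A0; case: Kq.
have [q Kq hq] := compact_EVT_min (ex_intro _ p Kp) cK cG.
have m0 : 0 < G q by apply: Gpos; rewrite inE in Kq.
exists (G q / C); first by rewrite divr_gt0.
move=> x z hx hz hzx.
have [Kxz Gxz] := red x z hx hz hzx.
have := hq _ (mem_set Kxz); rewrite Gxz.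
have p1 : 0 < `|x| by rewrite normr_gt0.
rewrite ler_pdivlMl // => h1.
apply: (le_trans _ h1).
rewrite mulrAC ler_pdivrMr // [`|x| * G q]mulrC -mulrA ler_pM2l // mulrC.
exact: hCb.
Qed.

Lemma big_est (R : realType) (n : nat) (nrm : 'rV[R]_n -> R) N (r : R) :
  is_norm nrm -> strictly_convex_norm nrm -> C1_gradient nrm N -> 0 < r ->
  exists2 c : R, 0 < c & forall x y, x != 0 -> dotv y (N x) = 0 ->
    r * nrm x <= nrm y -> c * nrm y <= nrm (x + y) - nrm x.
Proof.
move=> hn hsc hC r0.
have [h0 _ hZ hT] := hn.
have [c1 c10 hc1] := core hn hsc hC r0.
exists (c1 / r); first by rewrite divr_gt0.
move=> x y hx hy hxy.
have px := nrm_gt0 hn hx.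
have py : 0 < nrm y by apply: lt_le_trans hxy; rewrite mulr_gt0.
pose t := r * nrm x / nrm y.
have t0 : 0 < t by rewrite /t !mulr_gt0 ?invr_gt0.
have t1 : t <= 1 by rewrite /t ler_pdivrMr // mul1r.
have hz : dotv (t *: y) (N x) = 0 by rewrite dotvZl hy mulr0.
have hnz : nrm (t *: y) = r * nrm x.
  rewrite (nrmZp _ hn (ltW t0)) /t; field; exact: lt0r_neq0.
have := hc1 _ _ hx hz hnz.
have conv : x + t *: y = (1 - t) *: x + t *: (x + y).
  by rewrite scalerDr scalerBl scale1r addrA subrK.
have hle : nrm (x + t *: y) <= (1 - t) * nrm x + t * nrm (x + y).
  rewrite conv -(nrmZp _ hn (ltW t0)) -(nrmZp _ hn); last by rewrite subr_ge0.
  exact: hT.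
move=> h.
rewrite -(ler_pM2l t0).
have -> : t * (c1 / r * nrm y) = c1 * nrm x.
  by rewrite /t; field; rewrite !(gt_eqF r0, gt_eqF px, gt_eqF py).
lra.
Qed.

Lemma h_tan (R : realType) (n : nat) (nrm : 'rV[R]_n -> R) N x y :
  is_norm nrm -> C1_gradient nrm N -> x != 0 -> dotv y (N x) = 0 ->
  hfun nrm N x (x + y) = nrm (x + y) - nrm x.
Proof.
by move=> hn hC hx hy; rewrite /hfun dotvDl (euler hn hC hx) hy addr0.
Qed.

Lemma h_ge0 (R : realType) (n : nat) (nrm : 'rV[R]_n -> R) N x y :
  is_norm nrm -> C1_gradient nrm N -> x != 0 -> 0 <= hfun nrm N x y.
Proof. by move=> hn hC hx; rewrite /hfun subr_ge0; exact: supp. Qed.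

Theorem lemma6p4 (R : realType) (n : nat) (nrm : 'rV[R]_n -> R)
  (N : 'rV[R]_n -> 'rV[R]_n) :
  is_norm nrm -> strictly_convex_norm nrm -> C1_gradient nrm N ->
  (forall T r : R, 0 < T -> 0 < r ->
     (forall x y : 'rV[R]_n, x != 0 -> nrm y <= r * nrm x -> dotv y (N x) = 0 ->
        hfun nrm N x (x + 2 *: y) <= T * hfun nrm N x (x + y)) ->
     exists T' : R, forall x y : 'rV[R]_n, x != 0 -> dotv y (N x) = 0 ->
        hfun nrm N x (x + 2 *: y) <= T' * hfun nrm N x (x + y))
  /\
  (forall r K : R, 0 < r -> 0 < K ->
     (forall x y : 'rV[R]_n, x != 0 -> nrm y <= r * nrm x -> dotv y (N x) = 0 ->
        hfun nrm N x (x + y) <= K * hfun nrm N x (x - y)) ->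
     exists K' : R, forall x y : 'rV[R]_n, x != 0 -> dotv y (N x) = 0 ->
        hfun nrm N x (x + y) <= K' * hfun nrm N x (x - y)).
Proof.
move=> hn hsc hC; have [h0 _ hZ hT] := hn; split.
  move=> T r T0 r0 hyp.
  have [c c0 hc] := big_est hn hsc hC r0.
  exists (Num.max T (2 / c)) => x y hx hy.
  have h1 := h_ge0 (x + y) hn hC hx.
  have [small|big] := lerP (nrm y) (r * nrm x).
    apply: (le_trans (hyp _ _ hx small hy)); apply: ler_wpM2r => //.
    by rewrite le_max lexx.
  apply: (@le_trans _ _ (2 / c * hfun nrm N x (x + y))); last first.
    by apply: ler_wpM2r => //; rewrite le_max lexx orbT.
  have hy2 : dotv (2 *: y) (N x) = 0 by rewrite dotvZl hy mulr0.
  rewrite (h_tan hn hC hx hy2) (h_tan hn hC hx hy).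
  have := hc _ _ hx hy (ltW big).
  have := hT x (2 *: y); rewrite (nrmZp _ hn) // => ht.
  move=> hb.
  have : 2 * nrm y <= 2 / c * (c * nrm y).
    by rewrite mulrA divfK ?lt0r_neq0.
  have : 2 / c * (c * nrm y) <= 2 / c * (nrm (x + y) - nrm x).
    by apply: ler_wpM2l => //; rewrite divr_ge0 // ltW.
  lra.
move=> r K r0 K0 hyp.
have [c c0 hc] := big_est hn hsc hC r0.
exists (Num.max K (1 / c)) => x y hx hy.
have h1 := h_ge0 (x - y) hn hC hx.
have [small|big] := lerP (nrm y) (r * nrm x).
  apply: (le_trans (hyp _ _ hx small hy)); apply: ler_wpM2r => //.
  by rewrite le_max lexx.
apply: (@le_trans _ _ (1 / c * hfun nrm N x (x - y))); last first.
  by apply: ler_wpM2r => //; rewrite le_max lexx orbT.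
have hyN : dotv (- y) (N x) = 0 by rewrite dotvNl hy oppr0.
rewrite (h_tan hn hC hx hyN) (h_tan hn hC hx hy).
have := hc _ _ hx hyN; rewrite nrmN // => /(_ (ltW big)) hb.
have ht := hT x y.
have : nrm y <= 1 / c * (c * nrm y).
  by rewrite mulrA divfK ?lt0r_neq0 // mul1r.
have : 1 / c * (c * nrm y) <= 1 / c * (nrm (x - y) - nrm x).
  by apply: ler_wpM2l => //; rewrite divr_ge0 // ltW.
lra.
Qed.
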